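(* (i) Let $\boldsymbol{\pi}\in\mathbb{R}^n$ be a probability vector with $\boldsymbol{\pi}>0$ entrywise, and let $\mathcal{S}$ be an irreducible pattern. Then there exists a reversible stochastic matrix $X\in\mathbb{R}^{n\times n}(\mathcal{S})$ with stationary distribution $\boldsymbol{\pi}$ (in particular $\pi_iX_{ij}=\pi_jX_{ji}$ for all $i,j$). (ii) Let $\mathcal{P}$ and $\mathcal{S}$ be patterns, and let $P\in\mathbb{R}^{n\times n}(\mathcal{P})$ be a reversible stochastic matrix with stationary distribution $\boldsymbol{\pi}$. Then the set \[ \mathcal{F}=\{X\in\mathbb{R}^{n\times n}(\mathcal{S}\cup\mathcal{P}) : X_{ij}=P_{ij}\text{ for }\{i,j\}\in\mathcal{P}\setminus\mathcal{S},\ X\mathbf{1}=\mathbf{1},\ D_{\boldsymbol{\pi}}X=X^\top D_{\boldsymbol{\pi}},\ X\ge 0\} \] is not empty.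
   Context: A stochastic matrix is a nonnegative real matrix $P$ with $P\mathbf{1}=\mathbf{1}$, where $\mathbf{1}$ is the all-ones vector; $X\ge 0$ means entrywise nonnegativity. A stationary distribution of $P$ is a probability vector $\boldsymbol{\pi}$ with $\boldsymbol{\pi}^\top P=\boldsymbol{\pi}^\top$. A stochastic matrix is reversible if it is irreducible and its (unique, positive) stationary distribution $\boldsymbol{\pi}$ satisfies $\pi_iP_{ij}=\pi_jP_{ji}$ for all $i,j$, i.e. $D_{\boldsymbol{\pi}}P=P^\top D_{\boldsymbol{\pi}}$, with $D_{\boldsymbol{\pi}}$ the diagonal matrix with diagonal $\boldsymbol{\pi}$. A pattern $\mathcal{S}$ is a set of unordered pairs $\{i,j\}$, $1\le i,j\le n$, containing $\{i,i\}$ for all $i$. $\mathbb{R}^{n\times n}(\mathcal{S})$ is the set of real $n\times n$ matrices $\Delta$ with $\Delta_{ij}=\Delta_{ji}=0$ whenever $\{i,j\}\notin\mathcal{S}$. $\mathbb{R}^{n\times n}_{\mathrm{exact}}(\mathcal{S})$ is the set of real $n\times n$ matrices $\Delta$ such that ($\Delta_{ij}\neq0$ and $\Delta_{ji}\ne 0$) if and only if $\{i,j\}\in\mathcal{S}$. A pattern $\mathcal{S}$ is irreducible if every matrix in $\mathbb{R}^{n\times n}_{\mathrm{exact}}(\mathcal{S})$ is irreducible. *)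

(* Defs.v *)
From HB Require Import structures.
From mathcomp Require Import all_boot all_order all_algebra.
Set Implicit Arguments. Unset Strict Implicit. Unset Printing Implicit Defensive.
Import Order.TTheory GRing.Theory Num.Theory.
Local Open Scope ring_scope.

Section Defs.
Variables (R : realFieldType) (n : nat).

(* A pattern: a set of unordered pairs {i,j} containing every {i,i},
   encoded as a reflexive symmetric boolean relation on 'I_n
   ({i,j} \in S  <->  S i j). *)
Definition pattern (S : rel 'I_n) : Prop :=
  (forall i, S i i) /\ (forall i j, S i j = S j i).

Definition patU (S P : rel 'I_n) : rel 'I_n := fun i j => S i j || P i j.

Definition in_pattern (S : rel 'I_n) (A : 'M[R]_n) : Prop :=
  forall i j, ~~ S i j -> A i j = 0 /\ A j i = 0.

Definition in_exact_pattern (S : rel 'I_n) (A : 'M[R]_n) : Prop :=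
  forall i j, (A i j != 0 /\ A j i != 0) <-> S i j.

Definition irreducible_mx (A : 'M[R]_n) : Prop :=
  forall i j, connect (fun k l => A k l != 0) i j.

Definition irreducible_pattern (S : rel 'I_n) : Prop :=
  forall A : 'M[R]_n, in_exact_pattern S A -> irreducible_mx A.

Definition ones : 'cV[R]_n := const_mx 1.

Definition stochastic (P : 'M[R]_n) : Prop :=
  (forall i j, 0 <= P i j) /\ P *m ones = ones.

Definition prob_vec (pi : 'rV[R]_n) : Prop :=
  (forall i, 0 <= pi 0 i) /\ \sum_i pi 0 i = 1.

Definition stationary (pi : 'rV[R]_n) (P : 'M[R]_n) : Prop :=
  prob_vec pi /\ pi *m P = pi.

Definition detailed_balance (pi : 'rV[R]_n) (P : 'M[R]_n) : Prop :=
  diag_mx pi *m P = P^T *m diag_mx pi.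

Definition reversible (P : 'M[R]_n) : Prop :=
  stochastic P /\ irreducible_mx P /\
  forall pi, stationary pi P -> detailed_balance pi P.

End Defs.

(* Main.v *)
Require Import Defs.
From HB Require Import structures.
From mathcomp Require Import all_boot all_order all_algebra.
From mathcomp Require Import ring lra.
Import Order.TTheory GRing.Theory Num.Theory.
Local Open Scope ring_scope.

Lemma connect_inv (T : finType) (e : rel T) (a : pred T) :
  (forall x y, a x -> e x y -> a y) -> forall x y, connect e x y -> a x -> a y.
Proof.
move=> H x y /connectP [p Hp ->]; elim: p x Hp => //= z p IH x /andP[exz Hp] ax.
exact: IH Hp (H _ _ ax exz).
Qed.

Lemma stat_unique (R : realFieldType) (n : nat) (X : 'M[R]_n) (pi pi' : 'rV[R]_n) :
  (forall i j, 0 <= X i j) -> (forall i, \sum_j X i j = 1) ->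
  irreducible_mx X -> (forall i, 0 < pi 0 i) -> \sum_i pi 0 i = 1 ->
  (forall i j, pi 0 i * X i j = pi 0 j * X j i) ->
  stationary pi' X -> pi' = pi.
Proof.
move=> X0 X1 Xirr pos pi1 db [[_ s1] st].
pose h := fun i => pi' 0 i / pi 0 i.
have hX : forall j, \sum_i X j i * h i = h j.
  move=> j.
  have : (pi' *m X) 0 j = pi' 0 j by rewrite st.
  rewrite mxE => E.
  have pj := pos j.
  apply: (mulfI (lt0r_neq0 pj)).
  rewrite mulr_sumr /h mulrC divfK ?lt0r_neq0 // -[in RHS]E.
  apply: eq_bigr => i _.
  have pi0 := lt0r_neq0 (pos i).
  rewrite !mulrA -db. by field.
case: (pickP (@predT 'I_n)) => [i0 _|H]; last first.
  by move: pi1; rewrite (big_pred0 _ _ _ _ H) => /eqP; rewrite eq_sym oner_eq0.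
case: (@arg_maxP _ _ 'I_n i0 xpredT h isT) => k _ kmax.
have cl : forall x y, h x == h k -> X x y != 0 -> h y == h k.
  move=> x y /eqP hx Xxy.
  have E : \sum_y X x y * (h k - h y) = 0.
    under eq_bigr do rewrite mulrBr.
    by rewrite sumrB -mulr_suml X1 hX mul1r hx subrr.
  have nn : forall z : 'I_n, true -> 0 <= X x z * (h k - h z).
    by move=> z _; rewrite mulr_ge0 // subr_ge0; exact: kmax.
  have := @psumr_eq0P _ _ _ _ nn E y isT.
  by move/eqP; rewrite mulf_eq0 (negbTE Xxy) /= subr_eq0 eq_sym.
have hall : forall j, h j = h k.
  move=> j; apply/eqP.
  exact: (@connect_inv _ _ (fun j => h j == h k) cl k j (Xirr k j) (eqxx _)).
have pe : forall j, pi' 0 j = h k * pi 0 j.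
  move=> j; rewrite -(hall j) /h divfK // lt0r_neq0 //.
have hk1 : h k = 1.
  by move: s1; under eq_bigr do rewrite pe; rewrite -mulr_sumr pi1 mulr1.
apply/matrixP => i j; rewrite (ord1 i) pe hk1 mul1r //.
Qed.

Theorem proposition2p3 (R : realFieldType) (n : nat) :
  (* (i) *)
  (forall (pi : 'rV[R]_n) (S : rel 'I_n),
      prob_vec pi -> (forall i, 0 < pi 0 i) ->
      pattern S -> irreducible_pattern R S ->
      exists X : 'M[R]_n,
        in_pattern S X /\ reversible X /\ stationary pi X /\
        (forall i j, pi 0 i * X i j = pi 0 j * X j i))
  /\
  (* (ii) *)
  (forall (Pp S : rel 'I_n) (P : 'M[R]_n) (pi : 'rV[R]_n),
      pattern Pp -> pattern S ->
      in_pattern Pp P -> reversible P -> stationary pi P ->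
      exists X : 'M[R]_n,
        in_pattern (patU S Pp) X /\
        (forall i j, Pp i j -> ~~ S i j -> X i j = P i j) /\
        X *m ones R n = ones R n /\
        detailed_balance pi X /\
        (forall i j, 0 <= X i j)).
Proof.
split; last first.
  move=> Pp S P pi _ _ inP [[P0 P1] [_ Pdb]] st.
  exists P; split.
    move=> i j; rewrite /patU negb_or => /andP[_ nP]; exact: inP.
  by split=> //; split=> //; split=> //; apply: Pdb.
move=> pi S [pi0 pi1] pos [Srefl Ssym] Sirr.
pose c i := 1 - \sum_(k | S i k) pi 0 k.
pose X := \matrix_(i, j) ((if S i j then pi 0 j else 0) + (if j == i then c i else 0)) : 'M[R]_n.
have c0 : forall i, 0 <= c i.
  move=> i; rewrite /c subr_ge0 -pi1 big_mkcond /=.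
  by apply: ler_sum => k _; case: ifP.
have X0 : forall i j, 0 <= X i j.
  move=> i j; rewrite mxE addr_ge0 //; [by case: ifP | by case: ifP].
have X1 : forall i, \sum_j X i j = 1.
  move=> i; under eq_bigr do rewrite mxE.
  rewrite big_split /= -big_mkcond -big_mkcond /= big_pred1_eq /c.
  by rewrite addrC subrK.
have Xii : forall i, 0 < X i i.
  move=> i; rewrite mxE Srefl eqxx.
  exact: ltr_wpDr (c0 i) (pos i).
have Xij : forall i j, i != j -> X i j = if S i j then pi 0 j else 0.
  by move=> i j ne; rewrite mxE eq_sym (negbTE ne) addr0.
have db : forall i j, pi 0 i * X i j = pi 0 j * X j i.
  move=> i j; case: (eqVneq i j) => [->//|ne].
  rewrite Xij // Xij 1?(eq_sym j i) // Ssym.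
  by case: ifP => _; rewrite ?mulr0 // mulrC.
have ex : in_exact_pattern S X.
  move=> i j; case: (eqVneq i j) => [->|ne].
    by rewrite Srefl; split=> // _; split; exact: lt0r_neq0 (Xii j).
  rewrite Xij // Xij 1?(eq_sym j i) // (Ssym j i).
  case: (S i j); split=> //.
    by move=> _; split; exact: lt0r_neq0 (pos _).
  by case; rewrite eqxx.
have Xirr := Sirr X ex.
have stoch : stochastic X.
  split=> //; apply/matrixP => i k; rewrite /ones [RHS]mxE mxE -[RHS](X1 i).
  by apply: eq_bigr => j _; rewrite [const_mx _ _ _]mxE mulr1.
have stat : stationary pi X.
  split; first by [].
  apply/matrixP => i j; rewrite (ord1 i) mxE.
  under eq_bigr do rewrite db.
  by rewrite -mulr_sumr X1 mulr1.
have dbm : detailed_balance pi X.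
  apply/matrixP => i j; have := db i j; rewrite mul_diag_mx mul_mx_diag !mxE => ->.
  by rewrite mulrC.
exists X; split.
  move=> i j nS; have ne : i != j by apply: contraNneq nS => ->.
  by rewrite Xij // Xij 1?(eq_sym j i) // ?(Ssym j i) (negbTE nS).
split.
  split=> //; split=> // pi' st'.
  by rewrite (@stat_unique _ _ X pi pi' X0 X1 Xirr pos pi1 db st').
by split.
Qed.
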